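(* The graphs $G_k$, $k\ge 1$, have unbounded clique-width: for every integer $r$ there exists $k$ such that the clique-width of $G_k$ exceeds $r$. Consequently, the class of strict outerconfluent graphs has unbounded clique-width.
   Context: Clique-width of a graph is the minimum number of colors needed to construct it (up to forgetting colors) by the operations: create a single vertex with any color; take the disjoint union of two colored graphs; recolor all vertices of one color to another color; add all edges between vertices of color $a$ and vertices of color $b$ for two specified colors $a\ne b$. A strict outerconfluent drawing of a graph $G$ consists of finitely many smooth curves (tracks) in a topological disk, disjoint except at shared endpoints, which are vertices of $G$ (lying on the disk boundary) or junctions (where at least three tracks meet with the same tangent). An edge curve is a smooth curve in the union of tracks from a vertex to a vertex passing otherwise only through tracks and junctions. Each pair of adjacent vertices must be joined by exactly one edge curve, no edge curve joins a vertex to itself or two non-adjacent vertices, and every track lies on some edge curve. A strict outerconfluent graph is one with such a drawing. $G_k$ is defined by the following drawing in the closed upper half-plane. Vertices $v_1,\dots,v_{3^k}$ lie left to right on the boundary line, consecutive ones joined by a track along the line; odd-position vertices are blue, even-position ones yellow, and yellow vertices have no other tracks. Remaining tracks lie in levels $0,\dots,k-1$ (horizontal slabs, bottom to top). The bottom line of level $i$ carries points $p_{i,j}$, $0\le j<3^{k-i}/2$, left to right (the blue vertices for $i=0$, junctions for $i>0$), where tracks enter with vertical tangent. In level $i$, consecutive $p_{i,j},p_{i,j+1}$ are joined by a semicircle, subdivided by two junctions into three arcs when $j$ is a multiple of three (except that the single top-level semicircle joining $p_{k-1,0},p_{k-1,1}$ is not subdivided), a single track otherwise. For $i<k-1$ and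 each subdivided semicircle joining $p_{i,j},p_{i,j+1}$, tracks connect its two subdivision junctions to $p_{i+1,j/3}$, oriented so that each one connects $p_{i+1,j/3}$ downward by a smooth curve through the semicircle to $p_{i,j}$ and $p_{i,j+1}$. Two vertices are adjacent in $G_k$ iff some edge curve connects them. (This drawing is a strict outerconfluent drawing, so each $G_k$ is strict outerconfluent.) *)

(* Defs.v *)
From mathcomp Require Import all_boot.
Set Implicit Arguments. Unset Strict Implicit. Unset Printing Implicit Defensive.

(* Clique-width via k-expressions with named leaves.                         *)
(* A leaf [Vtx v c] creates the vertex v with color c; [Union] is the        *)
(* [Join a b e] adds all edges between color-a and color-b vertices (a<>b).  *)
Inductive cwexp (T : Type) :=
  | Vtx of T & nat
  | Union of cwexp T & cwexp T
  | Recolor of nat & nat & cwexp T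
  | Join of nat & nat & cwexp T.

Section CW.
Variable T : eqType.

Fixpoint cw_leaves (e : cwexp T) : seq T :=
  match e with
  | Vtx v _ => [:: v]
  | Union e1 e2 => cw_leaves e1 ++ cw_leaves e2
  | Recolor _ _ e' => cw_leaves e'
  | Join _ _ e' => cw_leaves e'
  end.

Fixpoint cw_color (e : cwexp T) (u : T) : nat :=
  match e with
  | Vtx _ c => c
  | Union e1 e2 => if u \in cw_leaves e1 then cw_color e1 u else cw_color e2 u
  | Recolor a b e' => if cw_color e' u == a then b else cw_color e' u
  | Join _ _ e' => cw_color e' u
  end.

Fixpoint cw_edge (e : cwexp T) (u v : T) : bool :=
  match e with
  | Vtx _ _ => false
  | Union e1 e2 => cw_edge e1 u v || cw_edge e2 u v
  | Recolor _ _ e' => cw_edge e' u v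
  | Join a b e' =>
      cw_edge e' u v ||
      [&& u \in cw_leaves e', v \in cw_leaves e' &
          ((cw_color e' u == a) && (cw_color e' v == b)) ||
          ((cw_color e' u == b) && (cw_color e' v == a))]
  end.

(* all colors used are among 0, ..., r-1, and joins use two distinct colors;
   unions are disjoint (enforced globally by uniqueness of the leaves) *)
Fixpoint cw_wf (r : nat) (e : cwexp T) : bool :=
  match e with
  | Vtx _ c => c < r
  | Union e1 e2 => cw_wf r e1 && cw_wf r e2
  | Recolor a b e' => [&& a < r, b < r & cw_wf r e']
  | Join a b e' => [&& a < r, b < r, a != b & cw_wf r e']
  end.
End CW.

(* The graph (T, adj) has clique-width at most r: some r-expression builds
   exactly this graph (each vertex created exactly once), forgetting colors. *)
Definition cw_le (T : finType) (adj : rel T) (r : nat) : Prop :=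
  exists e : cwexp T,
    [/\ cw_wf r e, perm_eq (cw_leaves e) (enum T) &
        forall u v, cw_edge e u v = adj u v].

(* The graphs G_k.  Vertices v_1..v_{3^k} are encoded as t : 'I_(3^k) with  *)
(* v_{t+1}.  Blue vertices are t even; the blue vertex t is p_{0, t/2}.     *)
(* Gk_down i j b : the blue vertex p_{0,b} is reachable from p_{i,j} by an  *)
(* edge-curve piece descending through the levels (at p_{i,j}, i>0, the two *)
(* tracks below lead through the subdivided semicircle p_{i-1,3j}p_{i-1,3j+1}*)
(* to p_{i-1,3j} resp. p_{i-1,3j+1}).                                       *)
Fixpoint Gk_down (i j b : nat) : bool :=
  match i with
  | 0 => b == j
  | i'.+1 => Gk_down i' (3 * j) b || Gk_down i' (3 * j).+1 b
  end.

(* two distinct blue vertices x y (blue indices) are joined by an edge curve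
   whose highest part is the semicircle of level i joining p_{i,j}, p_{i,j+1} *)
Definition Gk_blue_adj (k x y : nat) : bool :=
  [exists i : 'I_k, exists j : 'I_(3 ^ k),
     [&& 2 * j.+1 < 3 ^ (k - i) &
         (Gk_down i j x && Gk_down i j.+1 y) ||
         (Gk_down i j y && Gk_down i j.+1 x)]].

Definition Gk_adj (k : nat) : rel 'I_(3 ^ k) :=
  fun s t =>
    [|| (s : nat).+1 == t, (t : nat).+1 == s |
        [&& ~~ odd s, ~~ odd t & Gk_blue_adj k s./2 t./2]].

(* Main.v *)
Require Import Defs.
From mathcomp Require Import all_boot zify.
Set Implicit Arguments. Unset Strict Implicit. Unset Printing Implicit Defensive.

Fixpoint ones (i : nat) : nat := if i is i'.+1 then 3 * ones i' + 1 else 0.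

Lemma ones_exp i : (ones i).*2.+1 = 3 ^ i.
Proof. elim: i => [//|i IH]; rewrite /= expnS -IH; lia. Qed.

Lemma ones_lt i : ones i < 3 ^ i.
Proof. rewrite -ones_exp; lia. Qed.

Lemma onesD m l : ones (m + l) = ones m * 3 ^ l + ones l.
Proof. elim: l => [|l IH]; first by rewrite !addn0 expn0 muln1. 
rewrite addnS /= IH expnS; lia. Qed.

Lemma ones_mod3 m : 0 < m -> ones m %% 3 = 1.
Proof. case: m => [//|m] _ /=; lia. Qed.

Lemma exp3_gt0 i : 0 < 3 ^ i. Proof. by rewrite expn_gt0. Qed.

Lemma mod3_split b i : b %% 3 ^ i.+1 = b %% 3 ^ i + 3 ^ i * (b %/ 3 ^ i %% 3).
Proof.
have P := exp3_gt0 i.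
rewrite expnS mulnC.
set X := 3 ^ i.
have h1 := ltn_pmod b P. have h2 : b %/ X %% 3 < 3 by rewrite ltn_mod.
have E1 := divn_eq b X. have E2 := divn_eq (b %/ X) 3.
set q := b %/ X in E1 E2 h2 *. set r := b %% X in E1 h1 *.
set d := q %% 3 in E2 h2 *.
rewrite E1 E2.
have -> : (q %/ 3 * 3 + d) * X + r = (q %/ 3) * (X * 3) + (d * X + r) by nia.
rewrite modnMDl modn_small; nia.
Qed.

Lemma dig_high c r l L : l < L -> ((c * 3 ^ L + r) %/ 3 ^ l) %% 3 = (r %/ 3 ^ l) %% 3.
Proof.
move=> lL.
have -> : c * 3 ^ L = (c * 3 ^ (L - l.+1) * 3) * 3 ^ l.
  by rewrite -!mulnA -!expnS -expnD; congr (_ * 3 ^ _); lia.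
rewrite divnMDl ?exp3_gt0 //.
by rewrite -modnDm modnMl add0n modn_mod.
Qed.

Definition low01 (i b : nat) : bool :=
  all (fun l => (b %/ 3 ^ l) %% 3 != 2) (iota 0 i).

Lemma low01S i b : low01 i.+1 b = low01 i b && ((b %/ 3 ^ i) %% 3 != 2).
Proof. by rewrite /low01 -[i.+1]addn1 iotaD all_cat /= andbT. Qed.

Lemma down_char i j b : Gk_down i j b = (b %/ 3 ^ i == j) && low01 i b.
Proof.
elim: i j => [|i IH] j /=; first by rewrite divn1 andbT.
rewrite !IH low01S expnSr divnMA.
set q := b %/ 3 ^ i.
case: (low01 i b); rewrite ?andbF ?andFb //= ?andbT.
lia.
Qed.

Lemma low01_mod i b : low01 i b -> b %% 3 ^ i <= ones i.
Proof.
elim: i => [|i IH]; first by rewrite expn0 modn1.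
rewrite low01S => /andP [/IH h1 h2].
rewrite mod3_split /=.
have h3 : b %/ 3 ^ i %% 3 < 3 by rewrite ltn_mod.
have : b %/ 3 ^ i %% 3 <= 1 by lia.
have e := ones_exp i.
nia.
Qed.

Lemma low01_shift c r L : r < 3 ^ L -> low01 L (c * 3 ^ L + r) = low01 L r.
Proof.
move=> _; apply: eq_in_all => l; rewrite mem_iota add0n => /andP [_ lL].
by rewrite dig_high.
Qed.

Lemma low01_0 L : low01 L 0.
Proof. by apply/allP => l _; rewrite div0n mod0n. Qed.

Lemma ones_div l L : l <= L -> ones L %/ 3 ^ l = ones (L - l).
Proof.
move=> lL. have -> : ones L = ones (L - l) * 3 ^ l + ones l by rewrite -onesD subnK.
by rewrite divnMDl ?exp3_gt0 // divn_small ?ones_lt // addn0.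
Qed.

Lemma low01_ones L : low01 L (ones L).
Proof.
apply/allP => l; rewrite mem_iota add0n => /andP [_ lL].
rewrite ones_div ?ones_mod3; lia.
Qed.

Definition p3 (lam a : nat) := (a + 1) * 3 ^ lam + ones lam.

Lemma valid_of k lam a : (p3 lam a).*2 < 3 ^ k -> lam < k /\ (a + 1).*2 < 3 ^ (k - lam).
Proof.
rewrite /p3 => h.
have e := ones_exp lam.
have P := exp3_gt0 lam.
have lk : lam < k.
  rewrite ltnNge; apply/negP => kl.
  have : 3 ^ k <= 3 ^ lam by rewrite leq_exp2l.
  nia.
split => //.
have E : 3 ^ k = 3 ^ (k - lam) * 3 ^ lam by rewrite -expnD subnK // ltnW.
rewrite E in h.
have : (a + 1).*2.+1 * 3 ^ lam <= 3 ^ (k - lam) * 3 ^ lam by nia.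
rewrite leq_pmul2r //.
Qed.

Lemma down_base lam a : Gk_down lam a (a * 3 ^ lam).
Proof.
rewrite down_char mulnK ?exp3_gt0 // eqxx /=.
by rewrite -[a * 3 ^ lam]addn0 low01_shift ?exp3_gt0 // low01_0.
Qed.

Lemma down_p3 lam a : Gk_down lam (a + 1) (p3 lam a).
Proof.
rewrite down_char /p3 divnMDl ?exp3_gt0 // divn_small ?ones_lt // addn0 eqxx /=.
by rewrite low01_shift ?ones_lt // low01_ones.
Qed.

Lemma adj_up k lam a : a %% 3 = 2 -> (p3 lam a).*2 < 3 ^ k ->
  Gk_blue_adj k (a * 3 ^ lam) (p3 lam a).
Proof.
move=> a2 h; have [lk v] := valid_of h.
apply/existsP; exists (Ordinal lk).
have aj : a < 3 ^ k.
  apply: (@leq_trans (3 ^ (k - lam))); first lia.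
  by rewrite leq_exp2l // leq_subr.
apply/existsP; exists (Ordinal aj) => /=.
apply/andP; split; first by lia.
by rewrite down_base -addn1 down_p3.
Qed.

Lemma adj_down k lam a : a %% 3 = 2 -> (p3 lam a).*2 < 3 ^ k ->
  Gk_blue_adj k (a * 3 ^ lam) ((a - 1) * 3 ^ lam).
Proof.
move=> a2 h; have [lk v] := valid_of h.
apply/existsP; exists (Ordinal lk).
have aj : a - 1 < 3 ^ k.
  apply: (@leq_trans (3 ^ (k - lam))); first lia.
  by rewrite leq_exp2l // leq_subr.
apply/existsP; exists (Ordinal aj) => /=.
apply/andP; split; first by lia.
have -> : (a - 1).+1 = a by lia.
by rewrite !down_base orbT.
Qed.

Lemma bound_core lam a i jx jy y : a %% 3 = 2 -> Gk_down i jx (a * 3 ^ lam) ->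
  Gk_down i jy y -> (jy = jx.+1 \/ jx = jy.+1) ->
  (a - 1) * 3 ^ lam <= y <= p3 lam a.
Proof.
move=> a2; rewrite !down_char => /andP [/eqP ex lx] /andP [/eqP ey ly] hj.
have il : i <= lam.
  rewrite leqNgt; apply/negP => li.
  move/allP: lx => /(_ lam); rewrite mem_iota add0n li mulnK ?exp3_gt0 // a2.
  by move=> /(_ isT).
have E : 3 ^ lam = 3 ^ (lam - i) * 3 ^ i by rewrite -expnD subnK.
have L0 : 0 < 3 ^ (lam - i) := exp3_gt0 _.
have Y0 : 0 < 3 ^ i := exp3_gt0 i.
rewrite E mulnA mulnK // in ex.
have yd := divn_eq y (3 ^ i). rewrite ey in yd.
have ym : y %% 3 ^ i < 3 ^ i by rewrite ltn_pmod.
have ym2 : i = lam -> y %% 3 ^ i <= ones lam by move=> e; rewrite -e; exact: low01_mod.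
have eo := ones_exp lam.
rewrite /p3 E.
move: ex yd ym ym2 eo L0 Y0.
set Y := 3 ^ i; set L := 3 ^ (lam - i).
have LL : i < lam -> 3 * Y <= L * Y.
  move=> il2; rewrite leq_pmul2r ?exp3_gt0 //.
  by rewrite /L -[3]expn1 leq_exp2l // subn_gt0.
have LE : i = lam -> L = 1 by move=> e; rewrite /L e subnn expn0.
move=> ex yd ym ym2 eo L0 Y0.
rewrite mulnBl mulnDl mul1n.
have Pd : jx * Y = a * (L * Y) by rewrite -ex mulnA.
have LY : Y <= L * Y by rewrite leq_pmull.
have Pd2 : (jy * Y = jx * Y + Y) \/ (jx * Y = jy * Y + Y).
  by case: hj => ->; [left|right]; rewrite mulSn addnC.
case: (ltnP i lam) => il2.
- have := LL il2. lia.
- have ei : i = lam by lia.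
  have m2 := ym2 ei. have L1 := LE ei.
  have eo2 : (ones lam).*2.+1 = L * Y by rewrite eo E.
  rewrite L1 mul1n in Pd LY eo2 *. lia.
Qed.

Lemma adj_bound k lam a y : a %% 3 = 2 -> Gk_blue_adj k (a * 3 ^ lam) y ->
  (a - 1) * 3 ^ lam <= y <= p3 lam a.
Proof.
move=> a2 /existsP [i /existsP [j /andP [_ H]]].
case/orP: H => /andP [h1 h2].
- exact: (bound_core a2 h1 h2 (or_introl erefl)).
- exact: (bound_core a2 h2 h1 (or_intror erefl)).
Qed.

Lemma p3_inj lam lam' a a' : a %% 3 = 2 -> a' %% 3 = 2 -> lam < lam' ->
  p3 lam a != p3 lam' a'.
Proof.
move=> a2 a2' ll; apply/eqP => E.
have h1 : (p3 lam a %/ 3 ^ lam) %% 3 = 0.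
  rewrite /p3 divnMDl ?exp3_gt0 // divn_small ?ones_lt // addn0; lia.
have h2 : (p3 lam' a' %/ 3 ^ lam) %% 3 = 1.
  rewrite /p3 dig_high // ones_div ?ones_mod3; lia.
by rewrite E h2 in h1.
Qed.

Lemma p1_inj lam lam' a a' : a %% 3 = 2 -> a' %% 3 = 2 -> lam < lam' ->
  (a - 1) * 3 ^ lam != (a' - 1) * 3 ^ lam'.
Proof.
move=> a2 a2' ll; apply/eqP => E.
have h1 : ((a - 1) * 3 ^ lam %/ 3 ^ lam) %% 3 = 1.
  rewrite mulnK ?exp3_gt0 //; lia.
have h2 : ((a' - 1) * 3 ^ lam' %/ 3 ^ lam) %% 3 = 0.
  by rewrite -[(a' - 1) * 3 ^ lam']addn0 dig_high // div0n mod0n.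
by rewrite E h2 in h1.
Qed.

Definition adjN k (s t : nat) : bool :=
  [|| s.+1 == t, t.+1 == s | [&& ~~ odd s, ~~ odd t & Gk_blue_adj k s./2 t./2]].

Lemma blue_sym k x y : Gk_blue_adj k x y = Gk_blue_adj k y x.
Proof.
by apply/existsP/existsP => -[i /existsP [j H]]; exists i; apply/existsP; exists j;
  rewrite orbC.
Qed.

Lemma adjN_sym k s t : adjN k s t = adjN k t s.
Proof. by rewrite /adjN blue_sym orbA [(s.+1 == t) || _]orbC -orbA andbCA. Qed.

Lemma adjN_blue k b c : adjN k (2 * b) (2 * c) = Gk_blue_adj k b c.
Proof.
rewrite /adjN !mul2n !odd_double /= !doubleK.
have -> : ((b.*2).+1 == c.*2) = false by apply/negbTE; lia.
have -> : ((c.*2).+1 == b.*2) = false by apply/negbTE; lia.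
done.
Qed.

Lemma adjN_odd k s t : odd s -> adjN k s t = (s.+1 == t) || (t.+1 == s).
Proof. by move=> os; rewrite /adjN os /= orbF. Qed.

Section Expr.
Variable T : eqType.

Fixpoint subexp (e' e : cwexp T) : Prop :=
  e' = e \/ match e with
            | Vtx _ _ => False
            | Union e1 e2 => subexp e' e1 \/ subexp e' e2
            | Recolor _ _ e0 => subexp e' e0
            | Join _ _ e0 => subexp e' e0
            end.

Lemma subexp_refl e : subexp e e.
Proof. by case: e => *; left. Qed.

Lemma edge_leaves (e : cwexp T) u v : cw_edge e u v -> (u \in cw_leaves e) && (v \in cw_leaves e).
Proof.
elim: e => [w c|e1 IH1 e2 IH2|a b e IH|a b e IH] //=.
- rewrite !mem_cat; case/orP => [/IH1|/IH2] /andP [-> ->]; by rewrite ?orbT.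
- case/orP => [/IH //|/and3P [-> -> _] //].
Qed.

Lemma sub_leaves e' e : subexp e' e -> {subset cw_leaves e' <= cw_leaves e}.
Proof.
elim: e => [w c|e1 IH1 e2 IH2|a b e IH|a b e IH] /=.
- by case => // ->.
- case=> [->//|[/IH1 h|/IH2 h]] x /h; rewrite mem_cat => ->; by rewrite ?orbT.
- by case=> [->//|/IH].
- by case=> [->//|/IH].
Qed.

Lemma edge_out (e : cwexp T) u w : w \notin cw_leaves e -> cw_edge e u w = false.
Proof. by move=> hw; apply/negbTE/negP => /edge_leaves /andP [_ h]; rewrite h in hw. Qed.

Lemma twin e' e : subexp e' e -> uniq (cw_leaves e) ->
  forall u v, u \in cw_leaves e' -> v \in cw_leaves e' ->
  cw_color e' u = cw_color e' v ->
  cw_color e u = cw_color e v /\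
  forall w, w \notin cw_leaves e' -> cw_edge e u w = cw_edge e v w.
Proof.
elim: e => [x c|e1 IH1 e2 IH2|a b e IH|a b e IH].
- case=> // -> _ u v _ _ cuv; split => // w hw; by rewrite !edge_out.
- case=> [->|[s1|s2]] un u v hu hv cuv.
  + split => // w hw; by rewrite !edge_out.
  + move: un; rewrite /= cat_uniq => /and3P [u1 dis u2].
    have [c1 e1w] := IH1 s1 u1 u v hu hv cuv.
    have hu1 := sub_leaves s1 hu; have hv1 := sub_leaves s1 hv.
    rewrite /= hu1 hv1; split => // w hw.
    have nu : u \notin cw_leaves e2 by apply/negP => h; move/hasP: dis; apply; exists u.
    have nv : v \notin cw_leaves e2 by apply/negP => h; move/hasP: dis; apply; exists v.
    rewrite e1w //.
    case E1: (cw_edge e2 u w); first by move/edge_leaves: E1; rewrite (negbTE nu).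
    case E2: (cw_edge e2 v w); first by move/edge_leaves: E2; rewrite (negbTE nv).
    done.
  + move: un; rewrite /= cat_uniq => /and3P [u1 dis u2].
    have [c1 e1w] := IH2 s2 u2 u v hu hv cuv.
    have hu1 := sub_leaves s2 hu; have hv1 := sub_leaves s2 hv.
    have nu : u \notin cw_leaves e1 by apply/negP => h; move/hasP: dis; apply; exists u.
    have nv : v \notin cw_leaves e1 by apply/negP => h; move/hasP: dis; apply; exists v.
    rewrite /= (negbTE nu) (negbTE nv); split => // w hw.
    rewrite e1w //.
    case E1: (cw_edge e1 u w); first by move/edge_leaves: E1; rewrite (negbTE nu).
    case E2: (cw_edge e1 v w); first by move/edge_leaves: E2; rewrite (negbTE nv).
    done.
- case=> [->|s] un u v hu hv cuv.
  + split => // w hw; by rewrite !edge_out.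
  + have [c1 e1w] := IH s un u v hu hv cuv.
    by rewrite /= c1; split.
- case=> [->|s] un u v hu hv cuv.
  + split => // w hw; by rewrite !edge_out.
  + have [c1 e1w] := IH s un u v hu hv cuv.
    have hu1 := sub_leaves s hu; have hv1 := sub_leaves s hv.
    split => // w hw; rewrite /= e1w // c1 hu1 hv1 //.
Qed.

Lemma wf_sub r e' e : subexp e' e -> cw_wf r e -> cw_wf r e'.
Proof.
elim: e => [x c|e1 IH1 e2 IH2|a b e IH|a b e IH] /=.
- by case=> // ->.
- by case=> [-> //|[/IH1 h|/IH2 h]] /andP [w1 w2]; apply: h.
- by case=> [-> //|/IH h] /and3P [_ _ w]; apply: h.
- by case=> [-> //|/IH h] /and4P [_ _ _ w]; apply: h.
Qed.

Lemma wf_color r (e : cwexp T) u : cw_wf r e -> cw_color e u < r.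
Proof.
elim: e => [x c|e1 IH1 e2 IH2|a b e IH|a b e IH] /=.
- done.
- by case/andP => w1 w2; case: ifP => _; [apply: IH1|apply: IH2].
- by case/and3P => _ hb w; case: ifP => _; [|apply: IH].
- by case/and4P => _ _ _ w; apply: IH.
Qed.

End Expr.

Section Bal.
Variables (n N : nat).
Definition wt (e : cwexp 'I_n) : nat :=
  count (fun b => (2 * b) \in map val (cw_leaves e)) (iota 0 N).

Lemma wt_union e1 e2 : uniq (cw_leaves (Union e1 e2)) ->
  wt (Union e1 e2) = wt e1 + wt e2.
Proof.
rewrite /= cat_uniq => /and3P [_ dis _].
rewrite /wt -count_predUI.
have -> : count (predI (fun b => (2 * b) \in map val (cw_leaves e1))
                       (fun b => (2 * b) \in map val (cw_leaves e2))) (iota 0 N) = 0.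
  apply/eqP; rewrite -leqn0 leqNgt -has_count; apply/hasPn => b _ /=.
  apply/negP => /andP [/mapP [x hx ex] /mapP [y hy ey]].
  have xy : x = y by apply: ord_inj; rewrite -ex -ey.
  by move/hasP: dis; apply; exists y => //; rewrite -xy.
rewrite addn0; apply: eq_count => b /=; by rewrite map_cat mem_cat.
Qed.

Lemma wt_vtx v c : wt (Vtx v c) <= 1.
Proof.
rewrite /wt (@leq_trans (count (pred1 (val v)./2) (iota 0 N))) //.
  apply: sub_count => b /=; rewrite inE => /eqP <-.
  by rewrite mul2n doubleK.
by rewrite count_uniq_mem ?iota_uniq // leq_b1.
Qed.

Lemma balance (e : cwexp 'I_n) : uniq (cw_leaves e) -> forall m, 0 < m -> m <= wt e ->
  exists e', subexp e' e /\ m <= wt e' < 2 * m.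
Proof.
elim: e => [v c|e1 IH1 e2 IH2|a b e IH|a b e IH] un m m0 hm.
- exists (Vtx v c); split; first exact: subexp_refl.
  have := wt_vtx v c; lia.
- case: (ltnP (wt (Union e1 e2)) (2 * m)) => h.
    by exists (Union e1 e2); split; [exact: subexp_refl| lia].
  move: (un); rewrite /= cat_uniq => /and3P [u1 _ u2].
  rewrite wt_union // in h.
  case: (leqP m (wt e1)) => h1.
    by have [e' [s H]] := IH1 u1 m m0 h1; exists e'; split => //; right; left.
  have h2 : m <= wt e2 by lia.
  by have [e' [s H]] := IH2 u2 m m0 h2; exists e'; split => //; right; right.
- have [e' [s H]] := IH un m m0 hm; by exists e'; split => //; right.
- have [e' [s H]] := IH un m m0 hm; by exists e'; split => //; right.
Qed.
End Bal.

Section Pig.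
Variables (k r : nat) (SS : nat -> bool) (col : nat -> nat).
Local Notation n := (3 ^ k).
Hypothesis Hcol : forall u, u < n -> SS u -> col u < r.
Hypothesis Htwin : forall u v w, u < n -> v < n -> w < n -> SS u -> SS v ->
  col u = col v -> ~~ SS w -> adjN k u w = adjN k v w.

Definition dist_on (s0 : bool) x y :=
  exists w, [/\ w < n, SS w = ~~ s0 & adjN k x w != adjN k y w].

Definition sigv (s0 : bool) (x : nat) : r.-tuple bool :=
  if s0 then [tuple (col x == i) | i < r]
  else [tuple has (fun u => SS u && (col u == i) && adjN k x u) (iota 0 n) | i < r].

Lemma sigv_inj s0 x y : x < n -> y < n -> SS x = s0 -> SS y = s0 ->
  sigv s0 x = sigv s0 y -> ~ dist_on s0 x y.
Proof.
move=> xn yn sx sy E [w [wn sw dw]].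
have comp i : tnth (sigv s0 x) i = tnth (sigv s0 y) i by rewrite E.
move: E; case: s0 sx sy sw comp => sx sy sw comp _.
- have cx := Hcol xn sx.
  have := comp (Ordinal cx); rewrite /sigv !tnth_mktuple /= eqxx => /esym /eqP cy.
  by rewrite (Htwin xn yn wn sx sy (esym cy)) ?sw // eqxx in dw.
- have key a b : a < n -> b < n -> SS a = false -> SS b = false ->
      tnth (sigv false a) =1 tnth (sigv false b) ->
      adjN k a w -> adjN k b w.
    move=> an bn sa sb cmp aw.
    have cw := Hcol wn sw.
    have := cmp (Ordinal cw); rewrite /sigv !tnth_mktuple /=.
    have -> : has (fun u => SS u && (col u == col w) && adjN k a u) (iota 0 n).
      by apply/hasP; exists w; rewrite ?mem_iota ?add0n ?wn // sw eqxx aw.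
    move/esym/hasP => [u]; rewrite mem_iota add0n => /andP [_ un] /andP [/andP [su /eqP cu] bu].
    rewrite adjN_sym -(Htwin un wn bn su sw cu) ?sb // adjN_sym //.
  suff eqxy : adjN k x w = adjN k y w by rewrite eqxy eqxx in dw.
  apply/idP/idP; first exact: (key x y xn yn sx sy comp).
  by apply: (key y x yn xn sy sx) => i; rewrite comp.
Qed.

Lemma pigeon s0 xs : uniq xs -> all (fun x => (x < n) && (SS x == s0)) xs ->
  (forall x y, x \in xs -> y \in xs -> x != y -> dist_on s0 x y) -> size xs <= 2 ^ r.
Proof.
move=> ux ax dx.
have inj : {in xs &, injective (sigv s0)}.
  move=> x y hx hy E; apply/eqP; apply/negP => /negP nxy.
  move/allP: ax => ax.
  have /andP [xn /eqP sx] := ax x hx; have /andP [yn /eqP sy] := ax y hy.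
  exact: (sigv_inj xn yn sx sy E (dx x y hx hy nxy)).
have um : uniq (map (sigv s0) xs) by rewrite map_inj_in_uniq.
rewrite -(size_map (sigv s0)) -(card_uniqP um).
by rewrite (leq_trans (max_card _)) // card_tuple card_bool.
Qed.
End Pig.

Lemma split4 (T : Type) (p q : T -> bool) s :
  size s = count (fun x => p x && q x) s + count (fun x => p x && ~~ q x) s
         + count (fun x => ~~ p x && q x) s + count (fun x => ~~ p x && ~~ q x) s.
Proof. elim: s => //= x s ->; case: (p x); case: (q x); rewrite /=; lia. Qed.

Lemma bool_aux1 (x y z : bool) : x != y -> x = z -> y = ~~ z.
Proof. by case: x; case: y; case: z. Qed.
Lemma bool_aux2 (x z : bool) : (x == z) = false -> x = ~~ z.
Proof. by case: x; case: z. Qed.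

Section Path.
Variables (k r : nat) (SS : nat -> bool) (col : nat -> nat).
Local Notation n := (3 ^ k).
Hypothesis Hcol : forall u, u < n -> SS u -> col u < r.
Hypothesis Htwin : forall u v w, u < n -> v < n -> w < n -> SS u -> SS v ->
  col u = col v -> ~~ SS w -> adjN k u w = adjN k v w.
Variable N : nat.
Hypothesis HN : n.+1 = N.*2.

Definition fb b := SS (2 * b).
Definition bnds := [seq b <- iota 1 N.-1 | fb b.-1 != fb b].

Lemma bnds_mem b : (b \in bnds) = [&& 0 < b, b < N & fb b.-1 != fb b].
Proof. rewrite mem_filter mem_iota; case: b => [|b] /=; lia. Qed.

Lemma path_part s0 par :
  count (fun b => (SS (2 * b).-1 == s0) && (odd b == par)) bnds <= 2 ^ r.
Proof.
rewrite -size_filter.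
set L := filter _ bnds.
have uL : uniq L by rewrite filter_uniq // filter_uniq // iota_uniq.
have memL b : b \in L -> [/\ 0 < b, b < N, fb b.-1 != fb b, SS (2 * b).-1 = s0 & odd b = par].
  rewrite mem_filter bnds_mem => /andP [/andP [/eqP h1 /eqP h2] /and3P [h3 h4 h5]]; done.
rewrite -(size_map (fun b => (2 * b).-1)).
apply: (pigeon Hcol Htwin (s0 := s0)).
- rewrite map_inj_in_uniq // => x y /memL [x0 _ _ _ _] /memL [y0 _ _ _ _]; lia.
- apply/allP => y /mapP [b /memL [b0 bN _ sb _] ->]; rewrite sb eqxx andbT; lia.
- move=> y1 y2 /mapP [b /memL [b0 bN fbb sb pb] ->] /mapP [c /memL [c0 cN _ sc pc] ->] ne.
  have bc : b != c by apply: contraNneq ne => ->.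
  have e1 : 2 * b.-1 = (2 * b).-2 by lia.
  rewrite /fb e1 in fbb.
  pose w := if SS (2 * b).-2 == s0 then 2 * b else (2 * b).-2.
  exists w; split.
  + rewrite /w; case: ifP => _; lia.
  + rewrite /w; case: ifP => h.
    * by apply: bool_aux1 fbb _; apply/eqP.
    * exact: bool_aux2.
  + rewrite !adjN_odd; [| rewrite -subn1 oddB ?odd_mul /=; lia| rewrite -subn1 oddB ?odd_mul /=; lia].
    have oc : odd b = odd c by rewrite pb pc.
    rewrite /w; case: ifP => _; apply/eqP => /esym/eqP; lia.
Qed.

Lemma bnds_size : size bnds <= 4 * 2 ^ r.
Proof.
rewrite (split4 (fun b => SS (2 * b).-1) odd).
have h1 := path_part true true. have h2 := path_part true false.
have h3 := path_part false true. have h4 := path_part false false.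
have E1 : forall x, (SS (2 * x).-1 == true) = SS (2 * x).-1 by move=> x; case: (SS _).
have E2 : forall x, (SS (2 * x).-1 == false) = ~~ SS (2 * x).-1 by move=> x; case: (SS _).
have E3 : forall x, (odd x == true) = odd x by move=> x; case: (odd _).
have E4 : forall x, (odd x == false) = ~~ odd x by move=> x; case: (odd _).
rewrite (eq_count (a2 := fun b => (SS (2 * b).-1 == true) && (odd b == true))); last by move=> x; rewrite E1 E3.
rewrite (eq_count (a2 := fun b => (SS (2 * b).-1 == true) && (odd b == false)) (a1 := fun x => SS (2*x).-1 && ~~ odd x)); last by move=> x; rewrite E1 E4.
rewrite (eq_count (a2 := fun b => (SS (2 * b).-1 == false) && (odd b == true)) (a1 := fun x => ~~ SS (2*x).-1 && odd x)); last by move=> x; rewrite E2 E3.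
rewrite (eq_count (a2 := fun b => (SS (2 * b).-1 == false) && (odd b == false)) (a1 := fun x => ~~ SS (2*x).-1 && ~~ odd x)); last by move=> x; rewrite E2 E4.
lia.
Qed.
End Path.

Lemma count_interval lo w M :
  count (fun z => (lo <= z) && (z < lo + w)) (iota 0 M) = minn M (lo + w) - minn M lo.
Proof.
elim: M => [|M IH]; first by rewrite /= !min0n.
rewrite -addn1 iotaD count_cat IH /= add0n addn0.
case: (leqP lo M) => h1; case: (ltnP M (lo + w)) => h2 /=; lia.
Qed.

Lemma count_interval_le lo w M : count (fun z => (lo <= z) && (z < lo + w)) (iota 0 M) <= w.
Proof. rewrite count_interval; lia. Qed.

Lemma count_union (T : Type) (ps : seq T) (Q : T -> nat -> bool) s :
  count (fun z => has (fun p => Q p z) ps) s <= sumn (map (fun p => count (Q p) s) ps).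
Proof.
elim: ps => [|p ps IH] /=; first by rewrite count_pred0.
rewrite (@leq_trans (count (Q p) s + count (fun z => has (fun p => Q p z) ps) s)) //.
  by rewrite -count_predUI leq_addr.
by rewrite leq_add2l.
Qed.

Lemma sumn_le (T : Type) (ps : seq T) (F : T -> nat) c :
  (forall p, F p <= c) -> sumn (map F ps) <= size ps * c.
Proof. move=> h; elim: ps => //= p ps IH; rewrite mulSn leq_add //. Qed.

Lemma count_split_and (T : Type) (a b : pred T) s : count a s <= count (fun x => a x && b x) s + count (fun x => ~~ b x) s.
Proof. elim: s => //= x s IH; case: (a x); case: (b x) => /=; lia. Qed.

Lemma count_even m : count (fun g => ~~ odd g) (iota 0 (2 * m)) = m.
Proof.
elim: m => // m IH.
rewrite (_ : 2 * m.+1 = 2 * m + 2); last lia.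
rewrite iotaD count_cat IH /= add0n oddM /=; lia.
Qed.

Lemma count_window (P : pred nat) M : (forall g1 g2, P g1 -> P g2 -> g1 <= g2 -> g2 <= g1 + 6) ->
  count P (iota 0 M) <= 7.
Proof.
move=> hw.
case: (boolP (has P (iota 0 M))) => hp; last first.
  by move: hp; rewrite has_count lt0n negbK => /eqP ->.
have ex : exists g, P g by case/hasP: hp => g _ pg; exists g.
case: (ex_minnP ex) => g1 pg1 mn.
rewrite (@leq_trans (count (fun z => (g1 <= z) && (z < g1 + 7)) (iota 0 M))) //.
  apply: sub_count => z pz /=; have := mn z pz; have := hw g1 z pg1 pz; lia.
exact: count_interval_le.
Qed.

Lemma digit h u v : u < v -> 2 * (v - u) + 1 <= 3 ^ h -> 9 * 3 ^ h <= u ->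
  exists lam a pL, [/\ lam = h \/ lam = h.+1, a %% 3 = 2,
     pL = a * 3 ^ lam \/ pL = (a - 1) * 3 ^ lam,
     pL <= u /\ u <= pL + 9 * 3 ^ h & v <= p3 lam a /\ p3 lam a <= v + 9 * 3 ^ h].
Proof.
move=> uv hd hu.
have X0 := exp3_gt0 h.
have eo := ones_exp h.
have ud := divn_eq u (3 ^ h). have um := ltn_pmod u X0.
move: ud um hd hu eo.
set X := 3 ^ h; set m := u %/ X; set rho := u %% X.
move=> ud um hd hu eo.
have m9 : 9 <= m.
  rewrite leqNgt; apply/negP => h9.
  have : m * X <= 8 * X by rewrite leq_mul2r; apply/orP; right; lia.
  lia.
have Em : forall c, (m + c) * X = m * X + c * X by move=> c; rewrite mulnDl.
have Em' : forall c, c <= m -> (m - c) * X = m * X - c * X by move=> c _; rewrite mulnBl.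
case: (ltngtP (m %% 3) 1) => [m3|m3|m3].
- case: (ltngtP (m %% 3) 0) => [//|m3'|m3'].
  + have : m %% 3 < 3 by rewrite ltn_mod. lia.
  (* m %% 3 = 0 *)
  case: (leqP (rho + (v - u)) (ones h)) => hr.
  + exists h, (m - 1), ((m - 1 - 1) * X); split; [by left|lia|by right| |].
    * rewrite (_ : m - 1 - 1 = m - 2); last lia. rewrite Em' //; lia.
    * have E : p3 h (m - 1) = m * X + ones h by rewrite /p3 (_ : m - 1 + 1 = m) //; lia.
      rewrite E; lia.
  +
    have X3 : 3 ^ h.+1 = 3 * X by rewrite expnS.
    set m' := m %/ 3.
    have mm : m = 3 * m' by rewrite /m'; lia.
    have EM : forall c, (m' + c) * (3 * X) = m * X + c * (3 * X).
      by move=> c; rewrite mulnDl mm mulnA (mulnC m' 3).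
    have EM' : forall c, c <= m' -> (m' - c) * (3 * X) = m * X - c * (3 * X).
      by move=> c _; rewrite mulnBl mm mulnA (mulnC m' 3).
    have eo1 : ones h.+1 = 3 * ones h + 1 by [].
    have E0 : m' * (3 * X) = m * X by rewrite mm mulnA (mulnC m' 3).
    case: (ltngtP (m' %% 3) 1) => [m3''|m3''|m3''].
    * case: (ltngtP (m' %% 3) 0) => [//|m4|m4].
      -- have : m' %% 3 < 3 by rewrite ltn_mod. lia.
      -- exists h.+1, (m' - 1), ((m' - 1 - 1) * 3 ^ h.+1); split; [by right|lia|by right| |].
         ++ rewrite X3 (_ : m' - 1 - 1 = m' - 2); last lia. rewrite EM'; lia.
         ++ have E : p3 h.+1 (m' - 1) = m * X + ones h.+1.
              by rewrite /p3 (_ : m' - 1 + 1 = m' + 0); [rewrite X3 EM|lia]; lia.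
            rewrite E eo1; lia.
    * have : m' %% 3 < 3 by rewrite ltn_mod.
      move=> _. (* m' %% 3 = 2 *)
      exists h.+1, m', (m' * 3 ^ h.+1); split; [by right|lia|by left| |].
      -- rewrite X3 E0; lia.
      -- have E : p3 h.+1 m' = m * X + 3 * X + ones h.+1 by rewrite /p3 X3 EM mul1n.
         rewrite E eo1; lia.
    * exists h.+1, (m' + 1), (m' * 3 ^ h.+1); split; [by right|lia|right; congr (_ * _); lia| |].
      -- rewrite X3 E0; lia.
      -- have E : p3 h.+1 (m' + 1) = m * X + 2 * (3 * X) + ones h.+1
           by rewrite /p3 X3 -addnA EM.
         rewrite E eo1; lia.
- (* m %% 3 = 2 *)
  exists h, m, (m * X); split; [by left|lia|by left| |].
  + lia.
  + have E : p3 h m = m * X + X + ones h by rewrite /p3 Em mul1n.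
    rewrite E; lia.
- (* m %% 3 = 1 *)
  exists h, (m + 1), (m * X); split; [by left|lia|right; congr (_ * _); lia| |].
  + lia.
  + have E : p3 h (m + 1) = m * X + 2 * X + ones h by rewrite /p3 -addnA Em.
    rewrite E; lia.
Qed.

Definition dist a b := (a - b) + (b - a).

Lemma lam_neq g g' lam lam' : ~~ odd g -> ~~ odd g' -> g != g' ->
  (lam = g + 3 \/ lam = g + 4) -> (lam' = g' + 3 \/ lam' = g' + 4) -> lam != lam'.
Proof.
move=> og og' ne h h'.
have E := odd_double_half g; have E' := odd_double_half g'.
rewrite (negbTE og) in E; rewrite (negbTE og') in E'.
apply/eqP => e; move: ne; case: h h' => -> [] -> in e *; lia.
Qed.

Section Core.
Variables (k r : nat) (SS : nat -> bool) (col : nat -> nat) (N : nat).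
Local Notation n := (3 ^ k).
Hypothesis Hcol : forall u, u < n -> SS u -> col u < r.
Hypothesis Htwin : forall u v w, u < n -> v < n -> w < n -> SS u -> SS v ->
  col u = col v -> ~~ SS w -> adjN k u w = adjN k v w.
Hypothesis HN : n.+1 = N.*2.
Hypothesis HbalS : N %/ 3 <= count (fb SS) (iota 0 N).
Hypothesis HbalC : N %/ 3 <= count (fun b => ~~ fb SS b) (iota 0 N).

Local Notation f := (fb SS).
Local Notation B := (bnds SS N).
Definition Pts := [:: 0, N & B].

Definition goodb g := all (fun pp => (dist pp.1 pp.2 < 3 ^ g) || (3 ^ (g + 6) < dist pp.1 pp.2))
  (allpairs pair Pts Pts).
Definition near s p z := dist p z < s.
Definition far s z := ~~ has (fun p => near s p z) Pts.

Lemma goodP g p p' : goodb g -> p \in Pts -> p' \in Pts ->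
  dist p p' < 3 ^ g \/ 3 ^ (g + 6) < dist p p'.
Proof.
move=> /allP gd hp hp'; have := gd (p, p') (allpairs_f pair hp hp').
by case/orP; [left|right].
Qed.

Lemma B_in_Pts b : b \in B -> b \in Pts.
Proof. by move=> h; rewrite !inE h !orbT. Qed.

Lemma fb_const a d : a + d < N -> (forall b, a < b <= a + d -> b \notin B) -> f (a + d) = f a.
Proof.
elim: d => [|d IH] hN hb; first by rewrite addn0.
have IH' : f (a + d) = f a.
  apply: IH; first lia.
  by move=> b hb'; apply: hb; lia.
rewrite -IH'.
have := hb (a + d.+1); rewrite (bnds_mem SS HN).
have -> : (a + d.+1).-1 = a + d by lia.
have h1 : 0 < a + d.+1 by lia.
rewrite h1 hN /= => h.
have /negP := h ltac:(lia).
by case: (f (a + d) =P f (a + d.+1)).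
Qed.

Lemma Pts_le p : p \in Pts -> p <= N.
Proof.
rewrite !inE => /orP [/eqP ->//|/orP [/eqP ->//|]].
by rewrite (bnds_mem SS HN) => /and3P [_ /ltnW -> _].
Qed.

Lemma nonfar_count s : count (fun z => ~~ far s z) (iota 0 N) <= size Pts * (2 * s).
Proof.
rewrite /far (eq_count (a2 := fun z => has (fun p => near s p z) Pts)); last by move=> z; rewrite negbK.
apply: (leq_trans (count_union _ _ _)).
apply: sumn_le => p.
rewrite (@leq_trans (count (fun z => (p - s <= z) && (z < (p - s) + 2 * s)) (iota 0 N))) //.
  by apply: sub_count => z; rewrite /near /dist /=; lia.
exact: count_interval_le.
Qed.

Lemma far_witness s (a : pred nat) : size Pts * (2 * s) < N %/ 3 -> N %/ 3 <= count a (iota 0 N) ->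
  exists z, [/\ z < N, far s z & a z].
Proof.
move=> h1 h2.
have := count_split_and a (far s) (iota 0 N).
have := nonfar_count s.
move=> h3 h4.
have : 0 < count (fun x => a x && far s x) (iota 0 N) by lia.
rewrite -has_count => /hasP [z]; rewrite mem_iota add0n => /andP [_ zN] /andP [az fz].
by exists z.
Qed.

Lemma config g : goodb g -> size Pts * (2 * 3 ^ g) < N %/ 3 ->
  exists x d, [/\ 0 < d /\ d < 3 * 3 ^ g + 2,
     3 ^ (g + 6) - 3 ^ g - 2 <= x /\ x + d + (3 ^ (g + 6) - 3 ^ g - 2) < N,
     f x != f (x + d),
     (forall z, x - (3 ^ (g + 6) - 3 ^ g - 2) <= z <= x -> f z = f x) &
     (forall z, x + d <= z <= x + d + (3 ^ (g + 6) - 3 ^ g - 2) -> f z = f (x + d))].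
Proof.
move=> gd hsz.
have s0 : 0 < 3 ^ g := exp3_gt0 g.
have HE : 3 ^ (g + 6) = 729 * 3 ^ g by rewrite expnD mulnC.
have [z1 [z1N fz1 az1]] := far_witness hsz HbalS.
have [z0 [z0N fz0 az0]] := far_witness hsz HbalC.
have gP := fun p p' => @goodP g p p' gd.
move: gP HE s0 z1N fz1 z0N fz0 hsz.
set s := 3 ^ g; set H := 3 ^ (g + 6).
move=> gP HE s0 z1N fz1 z0N fz0 hsz.
pose Q d := has (fun x => (x + d < N) && far s x && far s (x + d) && (f x != f (x + d))) (iota 0 N).
have mkQ x d : x + d < N -> far s x -> far s (x + d) -> f x != f (x + d) -> Q d.
  move=> h1 h2 h3 h4; apply/hasP; exists x; last by rewrite h1 h2 h3 h4.
  rewrite mem_iota; clear -h1; lia.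
have exQ : exists d, Q d.
  case: (ltngtP z1 z0) => hz.
  - exists (z0 - z1); apply: (mkQ z1).
    + rewrite (_ : z1 + (z0 - z1) = z0) //; clear -hz; lia.
    + done.
    + by rewrite (_ : z1 + (z0 - z1) = z0) //; clear -hz; lia.
    + by rewrite (_ : z1 + (z0 - z1) = z0); [rewrite az1 (negbTE az0)|clear -hz; lia].
  - exists (z1 - z0); apply: (mkQ z0).
    + rewrite (_ : z0 + (z1 - z0) = z1) //; clear -hz; lia.
    + done.
    + by rewrite (_ : z0 + (z1 - z0) = z1) //; clear -hz; lia.
    + by rewrite (_ : z0 + (z1 - z0) = z1); [rewrite az1 (negbTE az0)|clear -hz; lia].
  - by move: az0; rewrite -hz az1.
case: (ex_minnP exQ) => d0 Qd0 mind0.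
have [x [xdN fx fy fxy]] : exists x : nat, [/\ x + d0 < N, far s x, far s (x + d0) & f x != f (x + d0)].
  case/hasP: Qd0 => x _ /andP [/andP [/andP [h1 h2] h3] h4]; by exists x.
have d0pos : 0 < d0 by rewrite lt0n; apply: contraNneq fxy => ->; rewrite addn0.
have farP z : far s z -> forall p, p \in Pts -> ~~ near s p z.
  by move=> fz p hp; apply: (hasPn fz).
have nf : forall z, x < z < x + d0 -> ~~ far s z.
  move=> z hz; apply/negP => fz.
  case: (boolP (f z == f x)) => e.
  - have : Q (x + d0 - z).
      apply: (mkQ z).
      + rewrite (_ : z + (x + d0 - z) = x + d0) //; clear -hz; lia.
      + done.
      + by rewrite (_ : z + (x + d0 - z) = x + d0) //; clear -hz; lia.
      + by rewrite (_ : z + (x + d0 - z) = x + d0); [rewrite (eqP e)|clear -hz; lia].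
    move/mind0; clear -hz; lia.
  - have : Q (z - x).
      apply: (mkQ x).
      + rewrite (_ : x + (z - x) = z) //; clear -hz xdN; lia.
      + done.
      + by rewrite (_ : x + (z - x) = z) //; clear -hz; lia.
      + by rewrite (_ : x + (z - x) = z); [rewrite eq_sym|clear -hz; lia].
    move/mind0; clear -hz; lia.
have nearex z : x < z < x + d0 -> exists2 p, p \in Pts & near s p z.
  by move/nf; rewrite negbK => /hasP [p hp np]; exists p.
have d02 : 1 < d0.
  rewrite ltnNge; apply/negP => d1.
  have d01 : d0 = 1 by clear -d1 d0pos; lia.
  rewrite d01 in fxy fy xdN.
  have hb : x + 1 \in B.
    have e : (x + 1).-1 = x by rewrite addn1.
    rewrite (bnds_mem SS HN) e fxy andbT addn1 /=; by rewrite -addn1.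
  have := farP _ fy (x + 1) (B_in_Pts hb); rewrite /near /dist.
  clear; lia.
have [c0 hc0 nc0] : exists2 p, p \in Pts & near s p (x + 1).
  by apply: nearex; clear -d02; lia.
have chain : forall t, x + 1 + t < x + d0 ->
    exists2 p, p \in Pts & near s p (x + 1 + t) && (dist p c0 < s).
  elim=> [|t IH] ht.
    exists c0 => //; rewrite addn0 nc0 /dist subnn /=; clear -s0; lia.
  have [p hp /andP [np dp]] := IH ltac:(clear -ht; lia).
  have [p' hp' np'] := nearex (x + 1 + t.+1) ltac:(clear -ht; lia).
  exists p' => //; apply/andP; split => //.
  move: np np' dp; rewrite /near => np np' dp.
  have d1 : dist p' p < s.
    case: (gP p' p hp' hp) => // h; move: h np np' HE; rewrite /dist; clear; lia.
  case: (gP p' c0 hp' hc0) => // h; move: h d1 dp HE; rewrite /dist; clear; lia.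
have [p1 hp1 /andP [np1 dp1]] := chain (d0 - 2) ltac:(clear -d02; lia).
rewrite (_ : x + 1 + (d0 - 2) = x + d0 - 1) in np1; last by clear -d02; lia.
have dbound : d0 < 3 * s + 2 by move: np1 dp1 nc0 d02; rewrite /near /dist; clear; lia.
have left : forall p, p \in Pts -> p <= x -> p + (H - s - 2) < x.
  move=> p hp px.
  have fpx := farP _ fx p hp.
  have fcx := farP _ fx c0 hc0.
  case: (gP p c0 hp hc0) => h; move: h fpx fcx nc0 px HE s0; rewrite /near /dist; clear; lia.
have right : forall p, p \in Pts -> x + d0 <= p -> x + d0 + (H - s - 2) < p.
  move=> p hp px.
  have fpx := farP _ fy p hp.
  have fcx := farP _ fy p1 hp1.
  case: (gP p p1 hp hp1) => h; move: h fpx fcx np1 px HE s0 d02; rewrite /near /dist; clear; lia.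
have h0 : 0 \in Pts by rewrite inE eqxx.
have hN' : N \in Pts by rewrite !inE eqxx orbT.
have xl := left 0 h0 (leq0n x).
have yr := right N hN' ltac:(clear -xdN; lia).
exists x, d0; split; [by split|by split; [clear -xl; lia|]|exact: fxy| |].
- move=> z hz.
  have E : x = z + (x - z) by clear -hz; lia.
  rewrite {1}E; apply/esym/fb_const.
    by rewrite -E; clear -xdN; lia.
  move=> b hb; apply/negP => hB.
  have := left b (B_in_Pts hB) ltac:(clear -hb hz; lia).
  clear -hb hz; lia.
- move=> z hz.
  have E : z = x + d0 + (z - (x + d0)) by clear -hz; lia.
  rewrite {1}E; apply: fb_const.
    by rewrite -E; clear -hz yr; lia.
  move=> b hb; apply/negP => hB.
  have := right b (B_in_Pts hB) ltac:(clear -hb; lia).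
  clear -hb hz; lia.
Qed.

Definition SuccW lam a s0 (mx : bool) := [/\ a %% 3 = 2, (p3 lam a).*2 < n,
  f (a * 3 ^ lam) = s0 & f (if mx then p3 lam a else (a - 1) * 3 ^ lam) = ~~ s0].

Lemma success g : goodb g -> size Pts * (2 * 3 ^ g) < N %/ 3 ->
  exists lam a s0 mx, (lam = g + 3 \/ lam = g + 4) /\ SuccW lam a s0 mx.
Proof.
move=> gd hsz.
have [x [d [[d0 d1] [xl xr] fxy cl cr]]] := config gd hsz.
have s0 : 0 < 3 ^ g := exp3_gt0 g.
have HE : 3 ^ (g + 6) = 729 * 3 ^ g by rewrite expnD mulnC.
have HE3 : 3 ^ (g + 3) = 27 * 3 ^ g by rewrite expnD mulnC.
have [lam [a [pL [hl a2 hpL [pl1 pl2] [p31 p32]]]]] :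
    exists lam a pL, [/\ lam = g + 3 \/ lam = (g + 3).+1, a %% 3 = 2,
     pL = a * 3 ^ lam \/ pL = (a - 1) * 3 ^ lam,
     pL <= x /\ x <= pL + 9 * 3 ^ (g + 3) & x + d <= p3 lam a /\ p3 lam a <= x + d + 9 * 3 ^ (g + 3)].
  apply: digit.
  - by clear -d0; lia.
  - rewrite HE3; clear -d1 s0; lia.
  - rewrite HE3; move: xl; rewrite HE; clear -s0; lia.
have fpL : f pL = f x.
  apply: cl; move: pl1 pl2 xl; rewrite HE HE3; clear -s0; lia.
have fp3 : f (p3 lam a) = f (x + d).
  apply: cr; move: p31 p32 xr; rewrite HE HE3; clear -s0; lia.
have p3N : (p3 lam a).*2 < n.
  have : p3 lam a < N by move: p32 xr; rewrite HE HE3; clear -s0; lia.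
  move: HN; clear; lia.
have hl' : lam = g + 3 \/ lam = g + 4 by case: hl => ->; [left|right; rewrite -addn1 -addnA].
have nb (b1 b2 : bool) : b1 != b2 -> b2 = ~~ b1 by case: b1; case: b2.
case: hpL => epL.
- exists lam, a, (f (a * 3 ^ lam)), true; split => //; split => //.
  by rewrite -epL fpL fp3; apply: nb.
- case: (boolP (f (a * 3 ^ lam) == f (p3 lam a))) => e.
  + exists lam, a, (f (a * 3 ^ lam)), false; split => //; split => //.
    by rewrite -epL fpL (eqP e) fp3 eq_sym in fxy *; apply: nb.
  + exists lam, a, (f (a * 3 ^ lam)), true; split => //; split => //.
    by apply: nb.
Qed.

Lemma dist_sym s0 x y : dist_on k SS s0 x y -> dist_on k SS s0 y x.
Proof. by case=> w [h1 h2 h3]; exists w; split => //; rewrite eq_sym. Qed.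

Lemma distinguish lam lam' a a' s0 mx : SuccW lam a s0 mx -> SuccW lam' a' s0 mx ->
  lam < lam' -> dist_on k SS s0 (2 * (a * 3 ^ lam)) (2 * (a' * 3 ^ lam')).
Proof.
move=> [a2 p3N fx fe] [a2' p3N' fx' fe'] ll.
pose ex (mx : bool) lam a := if mx then p3 lam a else (a - 1) * 3 ^ lam.
have exle lam0 a0 mx0 : ex mx0 lam0 a0 <= p3 lam0 a0.
  rewrite /ex /p3; case: mx0 => //.
  rewrite (@leq_trans ((a0 + 1) * 3 ^ lam0)) ?leq_addr // leq_mul2r; apply/orP; right.
  by clear; lia.
have adjx lam0 a0 mx0 : a0 %% 3 = 2 -> (p3 lam0 a0).*2 < n ->
    adjN k (2 * (a0 * 3 ^ lam0)) (2 * ex mx0 lam0 a0).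
  move=> h1 h2; rewrite adjN_blue /ex; case: mx0.
  - exact: adj_up.
  - exact: adj_down.
have exn lam0 a0 mx0 : (p3 lam0 a0).*2 < n -> 2 * ex mx0 lam0 a0 < n.
  move=> h; have := exle lam0 a0 mx0; move: h; clear; lia.
case E1: (adjN k (2 * (a' * 3 ^ lam')) (2 * ex mx lam a)).
- case E2: (adjN k (2 * (a * 3 ^ lam)) (2 * ex mx lam' a')).
  + exfalso.
    move: E1 E2; rewrite !adjN_blue => /(adj_bound a2') b1 /(adj_bound a2) b2.
    move: b1 b2; rewrite /ex; case: mx {fe fe'} => b1 b2.
    * move: (p3_inj a2 a2' ll) => /eqP; apply; move: b1 b2; clear; lia.
    * move: (p1_inj a2 a2' ll) => /eqP; apply; move: b1 b2; clear; lia.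
  + exists (2 * ex mx lam' a'); split.
    * exact: exn.
    * by rewrite /ex -fe'.
    * by rewrite E2 adjx.
- exists (2 * ex mx lam a); split.
  + exact: exn.
  + by rewrite /ex -fe.
  + by rewrite E1 adjx.
Qed.

Lemma build hs : uniq hs ->
  (forall g, g \in hs -> [/\ ~~ odd g, goodb g & size Pts * (2 * 3 ^ g) < N %/ 3]) ->
  exists V : bool -> bool -> seq nat,
  [/\ size (V true true) + size (V true false) + size (V false true) + size (V false false) = size hs,
      forall s0 mx, uniq (V s0 mx),
      forall s0 mx x, x \in V s0 mx -> exists g lam a,
         [/\ g \in hs, lam = g + 3 \/ lam = g + 4, SuccW lam a s0 mx & x = 2 * (a * 3 ^ lam)] &
      forall s0 mx x y, x \in V s0 mx -> y \in V s0 mx -> x != y -> dist_on k SS s0 x y].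
Proof.
elim: hs => [|g hs IH] /=.
  by move=> _ _; exists (fun _ _ => [::]); split.
case/andP => gn uh hh.
have hh' : forall g', g' \in hs -> [/\ ~~ odd g', goodb g' & size Pts * (2 * 3 ^ g') < N %/ 3].
  by move=> g' h'; apply: hh; rewrite inE h' orbT.
have [V [sz uV inv dV]] := IH uh hh'.
have [go gg gs] := hh g (mem_head _ _).
have [lam [a [s0' [mx' [hl sw]]]]] := success gg gs.
set x0 := 2 * (a * 3 ^ lam).
have key : forall x, x \in V s0' mx' -> dist_on k SS s0' x0 x.
  move=> x /inv [g' [lam' [a' [hg' hl' sw' ->]]]].
  have gg' : g != g' by apply: contraNneq gn => ->.
  have [og' _ _] := hh' g' hg'.
  have ll : lam != lam' := lam_neq go og' gg' hl hl'.
  case: (ltngtP lam lam') => hlt.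
  - exact: distinguish sw sw' hlt.
  - exact/dist_sym/(distinguish sw' sw hlt).
  - by rewrite hlt eqxx in ll.
have x0n : x0 \notin V s0' mx'.
  apply/negP => /key [w [_ _]]; by rewrite eqxx.
pose V' s0 mx := if (s0 == s0') && (mx == mx') then x0 :: V s0 mx else V s0 mx.
exists V'; split.
- rewrite -sz /V'; clear V' key x0n sw hl; case: s0'; case: mx' => /=; clear; lia.
- move=> s0 mx; rewrite /V'; case: ifP => [/andP [/eqP -> /eqP ->]|_] //=.
  by rewrite x0n uV.
- move=> s0 mx x; rewrite /V'; case: ifP => [/andP [/eqP e1 /eqP e2]|_].
  + rewrite inE => /orP [/eqP ->|]; first by exists g, lam, a; rewrite e1 e2 mem_head.
    move/inv => [g1 [l1 [a1 [h1 h2 h3 h4]]]]; exists g1, l1, a1; split => //.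
    by rewrite inE h1 orbT.
  + move/inv => [g1 [l1 [a1 [h1 h2 h3 h4]]]]; exists g1, l1, a1; split => //.
    by rewrite inE h1 orbT.
- move=> s0 mx x y; rewrite /V'; case: ifP => [/andP [/eqP e1 /eqP e2]|_]; last exact: dV.
  rewrite e1 e2 !inE => /orP [/eqP ->|hx] /orP [/eqP ->|hy] ne.
  + by rewrite eqxx in ne.
  + exact: (key y hy).
  + exact: (dist_sym (key x hx)).
  + exact: (dV s0' mx' x y hx hy ne).
Qed.

Definition badp (pp : nat * nat) g :=
  ~~ ((dist pp.1 pp.2 < 3 ^ g) || (3 ^ (g + 6) < dist pp.1 pp.2)).

Lemma count_notgood G : count (fun g => ~~ goodb g) (iota 0 G) <= size Pts * size Pts * 7.
Proof.
rewrite /goodb (eq_count (a2 := fun g => has (fun pp => badp pp g) (allpairs pair Pts Pts))); last first.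
  by move=> g; rewrite -has_predC.
apply: (leq_trans (count_union _ _ _)).
rewrite -(size_allpairs pair Pts Pts); apply: sumn_le => pp.
apply: count_window => g1 g2; rewrite /badp !negb_or -!leqNgt => /andP [h1 h2] /andP [h3 h4] _.
have : 3 ^ g2 <= 3 ^ (g1 + 6) by apply: leq_trans h3 h2.
by rewrite leq_exp2l.
Qed.

Lemma core_bound m : (forall g, g < 2 * m -> size Pts * (2 * 3 ^ g) < N %/ 3) ->
  m <= 4 * 2 ^ r + size Pts * size Pts * 7.
Proof.
move=> hG.
set hs := [seq g <- iota 0 (2 * m) | ~~ odd g && goodb g].
have uh : uniq hs by rewrite filter_uniq // iota_uniq.
have hh : forall g, g \in hs -> [/\ ~~ odd g, goodb g & size Pts * (2 * 3 ^ g) < N %/ 3].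
  move=> g; rewrite mem_filter mem_iota add0n => /andP [/andP [h1 h2] /andP [_ h3]].
  by split => //; apply: hG.
have [V [sz uV inv dV]] := build uh hh.
have bnd : forall s0 mx, size (V s0 mx) <= 2 ^ r.
  move=> s0 mx; apply: (pigeon Hcol Htwin (uV s0 mx)); last exact: dV.
  apply/allP => x /inv [g [lam [a [_ _ [a2 p3N fx _] ->]]]].
  have : a * 3 ^ lam <= p3 lam a.
    rewrite /p3 (@leq_trans ((a + 1) * 3 ^ lam)) ?leq_addr // leq_mul2r; apply/orP; right.
    by clear; lia.
  move: fx; rewrite /fb => -> le; rewrite eqxx andbT; move: le p3N; clear; lia.
have lo : m <= size hs + size Pts * size Pts * 7.
  rewrite size_filter.
  have := count_split_and (fun g => ~~ odd g) goodb (iota 0 (2 * m)).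
  rewrite count_even.
  move=> h2; apply: (leq_trans h2); rewrite leq_add2l.
  exact: count_notgood.
have := bnd true true; have := bnd true false; have := bnd false true; have := bnd false false.
move: sz lo; move: (size hs) (size Pts * size Pts * 7) => sh P7; clear; lia.
Qed.

End Core.

Lemma big_arith p0 g k : 0 < p0 -> g + p0 + 11 <= k ->
  p0 * (2 * 3 ^ g) < ((3 ^ k)./2.+1) %/ 3.
Proof.
move=> p0pos hk.
have E : 3 ^ k = 3 ^ g * 3 ^ (k - g) by rewrite -expnD subnKC //; lia.
have E2 : 3 ^ (k - g) = 3 ^ 11 * 3 ^ (k - g - 11) by rewrite -expnD; congr (3 ^ _); lia.
have h1 : p0 < 3 ^ (k - g - 11).
  apply: (@leq_trans (3 ^ p0)); first exact: ltn_expl.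
  by rewrite leq_exp2l //; lia.
have h2 := odd_double_half (3 ^ k).
have g0 := exp3_gt0 g.
set X := 3 ^ (k - g - 11) in E2 h1.
set Y := 3 ^ g in E g0.
have : 3 ^ 11 * p0 * Y < 3 ^ k.
  rewrite E E2; have : p0 * Y < X * Y by rewrite ltn_pmul2r.
  nia.
have T : 27 <= 3 ^ 11 by rewrite -[27]/(3 ^ 3) leq_exp2l.
move: h2 T; move: (3 ^ 11) => c h2 T hh.
nia.
Qed.

Theorem theorem17 :
  forall r : nat, exists k : nat, 0 < k /\ ~ cw_le (@Gk_adj k) r.
Proof.
move=> r.
set p0 := 4 * 2 ^ r + 2.
set m := 4 * 2 ^ r + p0 * p0 * 7 + 1.
exists (2 * m + p0 + 11); split; first lia.
set k := 2 * m + p0 + 11.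
case=> e [wf pe ed].
have ue : uniq (cw_leaves e) by rewrite (perm_uniq pe) enum_uniq.
set N := (3 ^ k)./2.+1.
have HN : (3 ^ k).+1 = N.*2.
  have := odd_double_half (3 ^ k); rewrite oddX orbT => h.
  rewrite /N doubleS; move: h; clear; lia.
have lt2 b : b < N -> 2 * b < 3 ^ k by move: HN; clear; lia.
have wtN : wt N e = N.
  rewrite /wt -[RHS](size_iota 0 N); apply/eqP; rewrite -all_count.
  apply/allP => b; rewrite mem_iota add0n => /andP [_ bN].
  apply/mapP; exists (Ordinal (lt2 b bN)) => //.
  by rewrite (perm_mem pe) mem_enum.
have k2 : 2 <= k by rewrite /k; lia.
have N3 : 0 < N %/ 3.
  have : 3 ^ 2 <= 3 ^ k by rewrite leq_exp2l.
  move: HN; clear; lia.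
have [e' [se' /andP [wl wu]]] := @balance (3 ^ k) N e ue (N %/ 3) N3 ltac:(rewrite wtN; exact: leq_div).
pose SS t := t \in map val (cw_leaves e').
pose col t := if (insub t : option 'I_(3 ^ k)) is Some o then cw_color e' o else 0.
have colE (o : 'I_(3 ^ k)) : col o = cw_color e' o by rewrite /col valK.
have SSE (o : 'I_(3 ^ k)) : SS o = (o \in cw_leaves e') by rewrite /SS mem_map //; exact: val_inj.
have Hcol : forall u, u < 3 ^ k -> SS u -> col u < r.
  move=> u hu _; rewrite -[u]/(val (Ordinal hu)) colE.
  apply: wf_color; exact: (wf_sub se' wf).
have Htwin : forall u v w, u < 3 ^ k -> v < 3 ^ k -> w < 3 ^ k -> SS u -> SS v ->
    col u = col v -> ~~ SS w -> adjN k u w = adjN k v w.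
  move=> u v w hu hv hw.
  rewrite -[u]/(val (Ordinal hu)) -[v]/(val (Ordinal hv)) -[w]/(val (Ordinal hw)).
  rewrite !SSE !colE => su sv cuv sw.
  have [_ tw] := twin se' ue su sv cuv.
  have := tw _ sw.
  by rewrite !ed.
have HbalS : N %/ 3 <= count (fb SS) (iota 0 N) by exact: wl.
have HbalC : N %/ 3 <= count (fun b => ~~ fb SS b) (iota 0 N).
  have := count_predC (fb SS) (iota 0 N); rewrite size_iota.
  have : count (fb SS) (iota 0 N) < 2 * (N %/ 3) by exact: wu.
  have := leq_divM N 3.
  rewrite -/(count (fun b => ~~ fb SS b) (iota 0 N)).
  move: (count (fb SS) (iota 0 N)) (count (fun b => ~~ fb SS b) (iota 0 N)) => c1 c2.
  clear; lia.
have szP : size (Pts SS N) <= p0.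
  rewrite /Pts /= /p0.
  have := bnds_size Hcol Htwin HN; clear; lia.
have := @core_bound k r SS col N Hcol Htwin HN HbalS HbalC m.
have hyp : forall g, g < 2 * m -> size (Pts SS N) * (2 * 3 ^ g) < N %/ 3.
  move=> g hg.
  apply: (@leq_ltn_trans (p0 * (2 * 3 ^ g))); first by rewrite leq_mul2r szP orbT.
  apply: big_arith; rewrite /p0 /k; lia.
move=> /(_ hyp).
have : size (Pts SS N) * size (Pts SS N) * 7 <= p0 * p0 * 7.
  by rewrite leq_mul2r; apply/orP; right; apply: leq_mul.
rewrite /m; move: (size (Pts SS N) * size (Pts SS N) * 7) => z; clear; lia.
Qed.
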